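(* For every $i\in\{1,2,3\}$, the class $\mathrm{FDir}(i)$ of D$i$-directable fuzzy automata and the class $\mathrm{CFDir}(i)$ of complete D$i$-directable fuzzy automata are closed under taking subautomata and homomorphic images. Moreover, the classes $\mathrm{CFDir}(2)$ and $\mathrm{CFDir}(3)$ are closed under finite direct products.
   Context: A fuzzy automaton is a triple $\mathcal F=(A,X,f)$ with $A$ a finite nonempty set of states, $X$ a finite nonempty alphabet, and $f:A\times X\times A\to[0,1]$, extended to words by $f^*(a,\varepsilon,a)=1$, $f^*(a,\varepsilon,b)=0$ ($b\neq a$), $f^*(a,vx,b)=\max_{c\in A}\min\{f^*(a,v,c),f(c,x,b)\}$. Let $\mathcal F(a,w)=\{b\in A\mid f^*(a,w,b)>0\}$. $\mathcal F$ is complete if $\mathcal F(a,x)\neq\emptyset$ for all $a\in A$, $x\in X$. A word $w\in X^*$ is D1-directing if there is $c\in A$ with $\mathcal F(a,w)=\{c\}$ for all $a\in A$; D2-directing if $\mathcal F(a,w)=\mathcal F(b,w)$ for all $a,b\in A$; D3-directing if there is $c\in A$ with $c\in\mathcal F(a,w)$ for all $a\in A$; $\mathcal F$ is D$i$-directable if it has a D$i$-directing word. $\mathcal G=(B,X,g)$ is a subautomaton of $\mathcal F$ if $B\subseteq A$, $\mathcal F(b,x)\subseteq B$ for all $b\in B$, $x\in X$, and $g(b,x,b')=f(b,x,b')$ for $b,b'\in B$. A surjective map $\varphi:A\to B$ is an epimorphism $\mathcal F\to\mathcal G$ if $g(\varphi(a),x,b)=\max\{f(a,x,a')\mid a'\in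 A,\ \varphi(a')=b\}$ for all $a\in A$, $b\in B$, $x\in X$ (maximum of the empty set being $0$); $\mathcal G$ is then a homomorphic image of $\mathcal F$. The direct product of $\mathcal F$ and $\mathcal G=(B,X,g)$ is $\mathcal F\times\mathcal G=(A\times B,X,h)$ with $h((a,b),x,(a',b'))=\min\{f(a,x,a'),g(b,x,b')\}$; finite direct products are obtained (up to isomorphism) by iterating this binary product. *)

(* Defs.v *)
From HB Require Import structures.
From mathcomp Require Import all_boot all_order all_algebra.
Set Implicit Arguments. Unset Strict Implicit. Unset Printing Implicit Defensive.
Import Order.TTheory GRing.Theory Num.Theory.
Local Open Scope ring_scope.

Section Fuzzy.
Variable R : realFieldType.

Definition fuzzy_automaton (A X : finType) (f : A -> X -> A -> R) : Prop :=
  [/\ (0 < #|A|)%N, (0 < #|X|)%N & forall a x b, 0 <= f a x b <= 1].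

(* Max of nonnegative values
   is taken with neutral element 0 (max of the empty set is 0). *)
Definition fstar (A X : finType) (f : A -> X -> A -> R) (a : A) (w : seq X)
  : A -> R :=
  foldl (fun (u : A -> R) (x : X) =>
           fun b => \big[Num.max/0]_(c : A) Num.min (u c) (f c x b))
        (fun b => (a == b)%:R) w.

Definition reach (A X : finType) (f : A -> X -> A -> R) (a : A) (w : seq X)
  : {set A} := [set b | 0 < fstar f a w b].

Definition complete (A X : finType) (f : A -> X -> A -> R) : Prop :=
  forall a x, reach f a [:: x] != set0.

Inductive dkind := D1 | D2 | D3.

Definition directing (i : dkind) (A X : finType) (f : A -> X -> A -> R)
  (w : seq X) : Prop :=
  match i with
  | D1 => exists c : A, forall a : A, reach f a w = [set c]
  | D2 => forall a b : A, reach f a w = reach f b w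
  | D3 => exists c : A, forall a : A, c \in reach f a w
  end.

Definition directable (i : dkind) (A X : finType) (f : A -> X -> A -> R) :=
  exists w : seq X, directing i f w.

Definition FDir (i : dkind) (A X : finType) (f : A -> X -> A -> R) : Prop :=
  fuzzy_automaton f /\ directable i f.

Definition CFDir (i : dkind) (A X : finType) (f : A -> X -> A -> R) : Prop :=
  FDir i f /\ complete f.

Definition subautomaton (A X : finType) (f : A -> X -> A -> R) (B : {set A})
  (g : {b : A | b \in B} -> X -> {b : A | b \in B} -> R) : Prop :=
  [/\ B != set0,
      (forall b x, b \in B -> reach f b [:: x] \subset B) &
      forall b x b', g b x b' = f (val b) x (val b')].

Definition epimorphism (A B X : finType) (f : A -> X -> A -> R)
  (g : B -> X -> B -> R) (phi : A -> B) : Prop :=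
  (forall b : B, exists a : A, phi a = b) /\
  forall a x b, g (phi a) x b = \big[Num.max/0]_(a' | phi a' == b) f a x a'.

Definition prod_aut (A B X : finType) (f : A -> X -> A -> R)
  (g : B -> X -> B -> R) : (A * B)%type -> X -> (A * B)%type -> R :=
  fun p x q => Num.min (f p.1 x q.1) (g p.2 x q.2).

Definition closed_sub
  (P : forall A X : finType, (A -> X -> A -> R) -> Prop) : Prop :=
  forall (A X : finType) (f : A -> X -> A -> R) (B : {set A})
         (g : {b : A | b \in B} -> X -> {b : A | b \in B} -> R),
    P A X f -> @subautomaton A X f B g -> P {b : A | b \in B} X g.

Definition closed_hom
  (P : forall A X : finType, (A -> X -> A -> R) -> Prop) : Prop :=
  forall (A B X : finType) (f : A -> X -> A -> R) (g : B -> X -> B -> R)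
         (phi : A -> B),
    P A X f -> epimorphism f g phi -> P B X g.

Definition closed_prod
  (P : forall A X : finType, (A -> X -> A -> R) -> Prop) : Prop :=
  forall (A B X : finType) (f : A -> X -> A -> R) (g : B -> X -> B -> R),
    P A X f -> P B X g -> P _ X (prod_aut f g).

End Fuzzy.

(* Main.v *)
Require Import Defs.
From mathcomp Require Import all_boot all_order all_algebra.
Set Implicit Arguments. Unset Strict Implicit. Unset Printing Implicit Defensive.
Import Order.TTheory GRing.Theory Num.Theory.
Local Open Scope ring_scope.

Section L.
Variable R : realFieldType.

Lemma bigmax_gt0 (I : eqType) (r : seq I) (P : pred I) (F : I -> R) :
  (0 < \big[Num.max/0]_(i <- r | P i) F i) = has (fun i => P i && (0 < F i)) r.
Proof.
elim: r => [|i r IH]; rewrite ?big_nil ?big_cons //=.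
by case: (P i) => //=; rewrite lt_max IH.
Qed.

Lemma bigmax_gt0_fin (I : finType) (P : pred I) (F : I -> R) :
  (0 < \big[Num.max/0]_(i | P i) F i) = [exists i, P i && (0 < F i)].
Proof.
rewrite bigmax_gt0; apply/hasP/existsP => [[i _ H]|[i H]]; first by exists i.
by exists i; rewrite ?mem_index_enum.
Qed.

Variables (A X : finType) (f : A -> X -> A -> R).

Lemma reach_nil a : reach f a [::] = [set a].
Proof. by apply/setP => b; rewrite !inE /fstar /= ltr0n lt0b eq_sym. Qed.

Lemma reach_rcons a v x :
  reach f a (rcons v x) = [set b | [exists c, (c \in reach f a v) && (0 < f c x b)]].
Proof.
apply/setP => b; rewrite !inE /fstar foldl_rcons bigmax_gt0_fin.
by apply/existsP/existsP => [[c H]|[c H]]; exists c; move: H; rewrite /reach lt_min inE.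
Qed.

Lemma mem_reach_rcons a v x b :
  (b \in reach f a (rcons v x)) = [exists c, (c \in reach f a v) && (0 < f c x b)].
Proof. by rewrite reach_rcons inE. Qed.

Lemma reach1 a x b : (b \in reach f a [:: x]) = (0 < f a x b).
Proof.
rewrite -[[:: x]]/(rcons [::] x) reach_rcons inE reach_nil.
apply/existsP/idP => [[c /andP[]]|H]; first by rewrite inE => /eqP ->.
by exists a; rewrite inE eqxx.
Qed.

Lemma reach_cat a v u :
  reach f a (v ++ u) = \bigcup_(c in reach f a v) reach f c u.
Proof.
elim/last_ind: u => [|u x IH].
  rewrite cats0; apply/setP => b; apply/idP/bigcupP => [H|[c H]].
    by exists b; rewrite // reach_nil inE.
  by rewrite reach_nil inE => /eqP ->.
rewrite -rcons_cat; apply/setP => b; rewrite reach_rcons inE.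
apply/existsP/bigcupP => [[c /andP[] ]|[c Hc]].
  rewrite IH => /bigcupP [d Hd Hcd] Hf.
  by exists d => //; rewrite reach_rcons inE; apply/existsP; exists c; rewrite Hcd.
rewrite reach_rcons inE => /existsP [d /andP[Hd Hf]].
by exists d; rewrite Hf IH andbT; apply/bigcupP; exists c.
Qed.

Lemma reach_n0 a w : complete f -> reach f a w != set0.
Proof.
move=> Hc; elim/last_ind: w => [|v x IH]; first by rewrite reach_nil; apply/set0Pn; exists a; rewrite inE.
case/set0Pn: IH => c Hc'; case/set0Pn: (Hc c x) => b Hb.
apply/set0Pn; exists b; rewrite reach_rcons inE; apply/existsP; exists c.
by rewrite Hc' -reach1.
Qed.


End L.
Section Sub.
Variable R : realFieldType.
Variables (A X : finType) (f : A -> X -> A -> R) (B : {set A})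
  (g : {b : A | b \in B} -> X -> {b : A | b \in B} -> R).
Hypothesis Hs : subautomaton f g.

Lemma reach_in a w : a \in B -> reach f a w \subset B.
Proof.
case: Hs => _ Hcl _ Ha; elim/last_ind: w => [|v x IH].
  by rewrite reach_nil sub1set.
apply/subsetP => b; rewrite reach_rcons inE => /existsP [c /andP[Hc Hf]].
by apply: (subsetP (Hcl c x (subsetP IH c Hc))); rewrite reach1.
Qed.

Lemma reach_sub (b : {b : A | b \in B}) w :
  reach g b w = [set b' | val b' \in reach f (val b) w].
Proof.
case: Hs => _ Hcl Hg; elim/last_ind: w => [|v x IH].
  by apply/setP => b'; rewrite !reach_nil !inE val_eqE.
apply/setP => b'; rewrite mem_reach_rcons inE mem_reach_rcons.
apply/existsP/existsP => [[c /andP[Hc Hf]]|[c /andP[Hc Hf]]].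
  rewrite IH inE Hg in Hc Hf; exists (val c); by rewrite Hc Hf.
have cB : c \in B by exact: (subsetP (reach_in v (valP b)) c Hc).
by exists (exist _ c cB); rewrite IH inE Hg /= Hc Hf.
Qed.

Lemma sub_dir i : directable i f -> directable i g.
Proof.
case: (Hs) => /set0Pn [b0 Hb0] Hcl Hg [w Hw]; exists w.
case: i Hw => /= [[c Hc]|Hc|[c Hc]].
- have cB : c \in B by apply: (subsetP (reach_in w Hb0)); rewrite Hc inE.
  exists (exist _ c cB) => b; apply/setP => b'.
  by rewrite reach_sub inE Hc !inE -val_eqE.
- by move=> a b; rewrite !reach_sub (Hc (val a) (val b)).
- have cB : c \in B by apply: (subsetP (reach_in w Hb0)); rewrite Hc.
  by exists (exist _ c cB) => b; rewrite reach_sub inE /= Hc.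
Qed.

Lemma sub_fuzzy : fuzzy_automaton f -> fuzzy_automaton g.
Proof.
case: (Hs) => /set0Pn [b0 Hb0] Hcl Hg [_ HX Hb]; split => //.
  by apply/card_gt0P; exists (exist _ b0 Hb0).
by move=> a x b; rewrite Hg.
Qed.

Lemma sub_complete : complete f -> complete g.
Proof.
move=> Hc b x; apply/set0Pn; case/set0Pn: (Hc (val b) x) => y Hy.
have yB : y \in B by exact: (subsetP (reach_in [:: x] (valP b)) y Hy).
by exists (exist _ y yB); rewrite reach_sub inE.
Qed.

End Sub.

Section Hom.
Variable R : realFieldType.
Variables (A B X : finType) (f : A -> X -> A -> R) (g : B -> X -> B -> R) (phi : A -> B).
Hypothesis Hs : epimorphism f g phi.

Lemma reach_hom a w : reach g (phi a) w = phi @: reach f a w.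
Proof.
case: Hs => _ Hg; elim/last_ind: w => [|v x IH].
  by rewrite !reach_nil imset_set1.
apply/setP => b; rewrite reach_rcons inE.
apply/existsP/imsetP => [[c /andP[]]|[a'' Ha'' ->]].
  rewrite IH => /imsetP [a' Ha' ->]; rewrite Hg bigmax_gt0_fin.
  case/existsP => a'' /andP[/eqP <- Hf]; exists a'' => //.
  by rewrite reach_rcons inE; apply/existsP; exists a'; rewrite Ha'.
move: Ha''; rewrite reach_rcons inE => /existsP [a' /andP[Ha' Hf]].
exists (phi a'); rewrite IH imset_f //= Hg bigmax_gt0_fin.
by apply/existsP; exists a''; rewrite eqxx.
Qed.

Lemma hom_dir i : directable i f -> directable i g.
Proof.
case: (Hs) => Hsur Hg [w Hw]; exists w.
case: i Hw => /= [[c Hc]|Hc|[c Hc]].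
- exists (phi c) => b; case: (Hsur b) => a <-.
  by rewrite reach_hom Hc imset_set1.
- move=> b1 b2; case: (Hsur b1) => a1 <-; case: (Hsur b2) => a2 <-.
  by rewrite !reach_hom (Hc a1 a2).
- exists (phi c) => b; case: (Hsur b) => a <-.
  by rewrite reach_hom imset_f.
Qed.

Lemma hom_fuzzy : fuzzy_automaton f -> fuzzy_automaton g.
Proof.
case: (Hs) => Hsur Hg [/card_gt0P [a0 _] HX Hb]; split => //.
  by apply/card_gt0P; exists (phi a0).
move=> b x b'; case: (Hsur b) => a <-; rewrite Hg.
apply: (big_ind (fun y => 0 <= y <= 1)); first by rewrite lexx ler01.
  move=> y z /andP[y0 y1] /andP[z0 z1].
  by rewrite le_max ge_max y0 y1 z1.
by move=> a' _; apply: Hb.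
Qed.

Lemma hom_complete : complete f -> complete g.
Proof.
case: (Hs) => Hsur _ Hc b x; case: (Hsur b) => a <-.
by rewrite reach_hom imset_eq0 Hc.
Qed.

End Hom.

Section Prod.
Variable R : realFieldType.
Variables (A B X : finType) (f : A -> X -> A -> R) (g : B -> X -> B -> R).

Lemma reach_prod a b w :
  reach (prod_aut f g) (a, b) w = setX (reach f a w) (reach g b w).
Proof.
elim/last_ind: w => [|v x IH].
  apply/setP => -[p q]; rewrite !reach_nil in_setX !inE.
  by rewrite -pair_eqE.
apply/setP => -[p q]; rewrite in_setX !reach_rcons !inE.
apply/existsP/andP => [[[c d] /andP[]]|[/existsP [c /andP[Hc Hf]] /existsP [d /andP[Hd Hg]]]].
  rewrite IH in_setX /prod_aut lt_min /= => /andP[Hc Hd] /andP[Hf Hg].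
  by split; apply/existsP; [exists c; rewrite Hc | exists d; rewrite Hd].
by exists (c, d); rewrite IH in_setX Hc Hd /prod_aut lt_min /= Hf Hg.
Qed.

Lemma prod_fuzzy : fuzzy_automaton f -> fuzzy_automaton g -> fuzzy_automaton (prod_aut f g).
Proof.
case=> HA HX Hf [HB _ Hg]; split => //; first by rewrite card_prod muln_gt0 HA HB.
move=> p x q; rewrite /prod_aut.
case/andP: (Hf p.1 x q.1) => f0 f1; case/andP: (Hg p.2 x q.2) => g0 g1.
by rewrite le_min ge_min f0 g0 f1.
Qed.

Lemma prod_complete : complete f -> complete g -> complete (prod_aut f g).
Proof.
move=> Hf Hg [a b] x; rewrite reach_prod.
case/set0Pn: (Hf a x) => p Hp; case/set0Pn: (Hg b x) => q Hq.
by apply/set0Pn; exists (p, q); rewrite in_setX Hp Hq.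
Qed.

Lemma prod_D2 : complete f -> complete g -> directable D2 f -> directable D2 g ->
  directable D2 (prod_aut f g).
Proof.
move=> Hcf Hcg [w1 H1] [w2 H2]; exists (w1 ++ w2) => /= [[a b] [a' b']].
rewrite !reach_prod !reach_cat (H1 a a'); congr setX.
have E : forall b0, \bigcup_(d in reach g b0 w1) reach g d w2 = reach g b w2.
  move=> b0; apply/setP => y; apply/bigcupP/idP => [[d _]|Hy].
    by rewrite (H2 d b).
  case/set0Pn: (reach_n0 b0 w1 Hcg) => d Hd; exists d => //.
  by rewrite (H2 d b).
by rewrite !E.
Qed.

Lemma prod_D3 : complete f -> complete g -> directable D3 f -> directable D3 g ->
  directable D3 (prod_aut f g).
Proof.
move=> Hcf Hcg [w1 [c1 H1]] [w2 [c2 H2]]; exists (w1 ++ w2) => /=.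
case/set0Pn: (reach_n0 c1 w2 Hcf) => x1 Hx1.
exists (x1, c2) => -[a b]; rewrite reach_prod in_setX !reach_cat.
apply/andP; split; apply/bigcupP; first by exists c1.
case/set0Pn: (reach_n0 b w1 Hcg) => d Hd; by exists d.
Qed.

End Prod.

Theorem proposition6p11 (R : realFieldType) :
  (forall i : dkind,
     [/\ closed_sub (@FDir R i), closed_sub (@CFDir R i),
         closed_hom (@FDir R i) & closed_hom (@CFDir R i)]) /\
  closed_prod (@CFDir R D2) /\ closed_prod (@CFDir R D3).
Proof.
split; last split.
- move=> i; split.
  + move=> A X f B g [Hf Hd] Hs; split; [exact: (sub_fuzzy Hs Hf) | exact: (sub_dir Hs Hd)].
  + move=> A X f B g [[Hf Hd] Hc] Hs; split; first split.
    * exact: (sub_fuzzy Hs Hf).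
    * exact: (sub_dir Hs Hd).
    * exact: (sub_complete Hs Hc).
  + move=> A B X f g phi [Hf Hd] Hs; split; [exact: (hom_fuzzy Hs Hf) | exact: (hom_dir Hs Hd)].
  + move=> A B X f g phi [[Hf Hd] Hc] Hs; split; first split.
    * exact: (hom_fuzzy Hs Hf).
    * exact: (hom_dir Hs Hd).
    * exact: (hom_complete Hs Hc).
- move=> A B X f g [[Hf Hd] Hc] [[Hg Hd'] Hc']; split; first split.
  + exact: prod_fuzzy.
  + exact: prod_D2.
  + exact: prod_complete.
- move=> A B X f g [[Hf Hd] Hc] [[Hg Hd'] Hc']; split; first split.
  + exact: prod_fuzzy.
  + exact: prod_D3.
  + exact: prod_complete.
Qed.
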